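(* Let $\{X^I\}_{I\in\mathcal{I}}$ satisfy conditions (i)–(v) of the context. Then for every $\varepsilon>0$ there is $M>0$ such that $\mathbb{P}(X^{[0,2^n]}(1)\ge M)\le\varepsilon$ for all $n\in\mathbb{N}$.
   Context: $\mathcal{I}$ is the set of closed bounded intervals of $\mathbb{R}$. For each $I\in\mathcal{I}$, $X^I=(X^I(t))_{t\in I}$ is a real stochastic process. Assume: (i) $\mathbb{E}[\log^+|X^I(t)|]<\infty$ for all $I$, $t\in I$. (ii) $\lim_{s\to t}\mathbb{P}(|X^I(t)-X^I(s)|>\varepsilon)=0$ for all $\varepsilon>0$. (iii) $X^{[a,b]}(a)=X^{[a,b]}(b)=0$. (iv) For $I'=[a,b]\subset I$, conditionally on $(X^I(t))_{t\in I\setminus I'}$, $(X^I(s))_{s\in I'}$ has the law of $L(s)+\tilde X^{I'}(s)$, where $L$ is the linear interpolation between $X^I(a)$ and $X^I(b)$ and $\tilde X^{I'}$ is an independent copy of $X^{I'}$. (v) For $a\in\mathbb{R}$, $c>0$: $(X^{I-a}(t-a))_{t\in I}\overset{(d)}{=}(X^I(t))_{t\in I}$ and $(c^{-1/2}X^{cI}(ct))_{t\in I}\overset{(d)}{=}(X^I(t))_{t\in I}$. *)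

(* Defs.v *)
From HB Require Import structures.
From mathcomp Require Import all_boot all_order all_algebra.
From mathcomp Require Import all_classical all_reals all_analysis.
Set Implicit Arguments. Unset Strict Implicit. Unset Printing Implicit Defensive.
Import Order.TTheory GRing.Theory Num.Theory.
Import numFieldNormedType.Exports.
Local Open Scope classical_set_scope.
Local Open Scope ring_scope.

(* A family of processes indexed by closed bounded intervals [c,d] (c <= d):
   [X c d t w] is X^{[c,d]}(t)(w); only values with c <= t <= d matter. *)
Section Defs.
Context {dT : measure_display} {T : measurableType dT} {R : realType}.
Implicit Types (P : probability T R) (X : R -> R -> R -> T -> R).

Definition logp (x : R) : R := if x <= 1 then 0 else ln x.

Definition linterp (a b x y s : R) : R := x + (y - x) * ((s - a) / (b - a)).

Definition fdd_event (Y : R -> T -> R) (k : nat) (ts : 'I_k -> R)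
  (As : 'I_k -> set R) : set T := [set w | forall j, As j (Y (ts j) w)].

Definition meas_family X := forall c d t, c <= d -> c <= t <= d ->
  measurable_fun setT (X c d t).

Definition cond_i P X := forall c d t, c <= d -> c <= t <= d ->
  (\int[P]_w (logp `|X c d t w|)%:E < +oo)%E.

Definition cond_ii P X := forall c d t, c <= d -> c <= t <= d ->
  forall eps e : R, 0 < eps -> 0 < e -> exists2 delta : R, 0 < delta &
    forall s, c <= s <= d -> `|s - t| < delta ->
      (P [set w | (eps < `|X c d t w - X c d s w|)%R] <= e%:E)%E.

Definition cond_iii X := forall c d, c <= d ->
  (forall w, X c d c w = 0) /\ (forall w, X c d d w = 0).

(* (iv) spatial Markov property, stated on finite-dimensional rectangles:
   for times ts outside [a,b] (in [c,d]) and ss in [a,b], the joint law of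
   ((X(ts), X(a), X(b)), X(ss)) is that of ((X(ts),X(a),X(b)), L(ss)+X~(ss))
   with X~ an independent copy of X^{[a,b]}. *)
Definition cond_iv P X := forall c d a b, c <= a -> a <= b -> b <= d ->
  forall (k : nat) (ts : 'I_k -> R) (As : 'I_k -> set R) (A1 A2 : set R)
         (m : nat) (ss : 'I_m -> R) (Bs : 'I_m -> set R),
  (forall j, c <= ts j <= d /\ (ts j < a \/ b < ts j)) ->
  (forall i, a <= ss i <= b) ->
  (forall j, measurable (As j)) -> measurable A1 -> measurable A2 ->
  (forall i, measurable (Bs i)) ->
  let Eout := fdd_event (X c d) ts As `&` [set w | A1 (X c d a w)]
              `&` [set w | A2 (X c d b w)] in
  let phi := fun x y : R =>
    P [set w | forall i, Bs i (linterp a b x y (ss i) + X a b (ss i) w)] in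
  P (Eout `&` fdd_event (X c d) ss Bs)
  = (\int[P]_w ((\1_Eout w)%:E * phi (X c d a w) (X c d b w)))%E.

(* (v) translation and Brownian scaling invariance, in finite-dimensional law *)
Definition cond_v P X :=
  (forall c d h, c <= d -> forall (k : nat) (ts : 'I_k -> R) (As : 'I_k -> set R),
     (forall j, c <= ts j <= d) -> (forall j, measurable (As j)) ->
     P (fdd_event (fun t => X (c - h) (d - h) (t - h)) ts As)
     = P (fdd_event (X c d) ts As)) /\
  (forall c d l, c <= d -> 0 < l -> forall (k : nat) (ts : 'I_k -> R) (As : 'I_k -> set R),
     (forall j, c <= ts j <= d) -> (forall j, measurable (As j)) ->
     P (fdd_event (fun t w => (Num.sqrt l)^-1 * X (l * c) (l * d) (l * t) w) ts As)
     = P (fdd_event (X c d) ts As)).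

End Defs.

(* Main.v *)
Require Import Defs.
From HB Require Import structures.
From mathcomp Require Import all_boot all_order all_algebra.
From mathcomp Require Import all_classical all_reals all_analysis.
From mathcomp Require Import lra ring measurable_realfun.
Import Order.TTheory GRing.Theory Num.Theory.
Local Open Scope classical_set_scope.
Local Open Scope ring_scope.

Section Aux.
Context (dT : measure_display) (T : measurableType dT) (R : realType)
  (P : probability T R).

Lemma mset_lt d' (T' : measurableType d') (f : T' -> R) (a : R) : measurable_fun setT f ->
  measurable [set w | a < `|f w|].
Proof.
move=> mf.
have mg := measurableT_comp (@measurable_realfun.normr_measurable R setT) mf.
have := mg measurableT `]a, +oo[%classic (measurable_itv _).
rewrite setTI; congr (measurable _); apply/seteqP; split => w /=;
  by rewrite in_itv /= andbT.
Qed.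

Lemma mset_le d' (T' : measurableType d') (f : T' -> R) (a : R) : measurable_fun setT f ->
  measurable [set w | a <= `|f w|].
Proof.
move=> mf.
have mg := measurableT_comp (@measurable_realfun.normr_measurable R setT) mf.
have := mg measurableT `[a, +oo[%classic (measurable_itv _).
rewrite setTI; congr (measurable _); apply/seteqP; split => w /=;
  by rewrite in_itv /= andbT.
Qed.

Lemma ge0_le_integral_nm (f g : T -> \bar R) :
  (forall x, (0 <= f x)%E) -> (forall x, (f x <= g x)%E) ->
  (\int[P]_x f x <= \int[P]_x g x)%E.
Proof.
move=> f0 fg.
have g0 : forall x, (0 <= g x)%E by move=> x; exact: le_trans (f0 x) (fg x).
rewrite !ge0_integralTE //.
apply: le_ereal_sup => _ [h hf <-]; exists h => //= x.
exact: le_trans (hf x) (fg x).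
Qed.


Lemma setI1 (A : set T) : [set w | 'I_1 -> A w] = A.
Proof. by apply/seteqP; split => w /=; [apply; exact: ord0 | move=> h]. Qed.

Lemma step (X : R -> R -> R -> T -> R) (n : nat) (Mv t : R) :
  meas_family X -> cond_iii X -> cond_iv P X ->
  (P [set w | (Mv + t < `|X 0 (2^+n.+1) 1 w|)%R] <=
   P [set w | (Mv < `|X 0 (2^+n) 1 w|)%R] +
   P [set w | (2^+n * t <= `|X 0 (2^+n.+1) (2^+n) w|)%R])%E.
Proof.
move=> hm hiii hiv.
set d := (2:R)^+n.+1; set b := (2:R)^+n.
have b1 : 1 <= b by rewrite /b exprn_ege1 // ler1n.
have b0 : 0 < b by exact: lt_le_trans ltr01 b1.
have bd : b <= d by rewrite /d exprS -/b ler_peMl // ?ltW //; lra.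
have d0 : 0 <= d by exact: le_trans (ltW b0) bd.
have m1 : measurable_fun setT (X 0 d 1).
  by apply: hm => //; rewrite ler01 /= (le_trans b1 bd).
have mb : measurable_fun setT (X 0 d b).
  by apply: hm => //; rewrite (ltW b0) /= bd.
have mb1 : measurable_fun setT (X 0 b 1).
  by apply: hm => //; rewrite ?ler01 ?b1 ?(ltW b0).
have := hiv 0 d 0 b (lexx 0) (ltW b0) bd 0 (fun _ => 0) (fun _ => setT) setT
  `](- (b * t)), (b * t)[%classic 1 (fun _ => 1)
  (fun _ => [set z | Mv + t < `|z|]).
move=> /(_ (fun j => match j with Ordinal _ h => False_ind _ (notF h) end)).
move=> /(_ (fun _ => ltac:(by rewrite ler01 b1))).
move=> /(_ (fun _ => measurableT) measurableT (measurable_itv _)).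
move=> /(_ (fun _ => @mset_lt _ R id _ (@measurable_id _ _ setT))).
move=> /=.
move=> Heq; cbv zeta in Heq.
set Eout := (X in P (X `&` _)) in Heq.
set F := fdd_event _ _ _ in Heq.
have EoutE : Eout = X 0 d b @^-1` `](- (b * t)), (b * t)[%classic.
  apply/seteqP; split => w /=; first by case.
  by move=> h; split => //; split => // -[].
have FE : F = [set w | (Mv + t < `|X 0 d 1 w|)%R].
  apply/seteqP; split => w /=; first by apply; exact: ord0.
  by move=> h.
have mEout : measurable Eout.
  by rewrite EoutE; have := mb measurableT _ (measurable_itv `](- (b * t)), (b * t)[); rewrite setTI.
have mF : measurable F by rewrite FE; exact: mset_lt.
set G := [set w | (Mv < `|X 0 b 1 w|)%R].
have mG : measurable G by exact: mset_lt.
set C := [set w | (b * t <= `|X 0 d b w|)%R].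
have mC : measurable C by exact: mset_le.
have sub : [set w | (Mv + t < `|X 0 d 1 w|)%R] `<=` (Eout `&` F) `|` C.
  move=> w h; have [lt|ge] := ltP `|X 0 d b w| (b * t).
    by left; split; [rewrite EoutE /= in_itv /= -ltr_norml | rewrite FE].
  by right.
apply: (le_trans (le_measure _ _ _ sub)); rewrite ?inE; first exact: mset_lt.
  exact: measurableU (measurableI _ _ mEout mF) mC.
apply: (le_trans (measureU2 _ (measurableI _ _ mEout mF) mC)).
apply: leeD => //.
move: Heq; set I := (\int[P]_w _)%E => Heq.
suff HI : (I <= P G)%E by rewrite -Heq in HI; exact: HI.
rewrite /I.
apply: (le_trans (@ge0_le_integral_nm _ (cst (P G)) _ _)).
- move=> w; apply: mule_ge0; last exact: measure_ge0.
  by rewrite indicE lee_fin ler0n.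
- move=> w; rewrite indicE; case: (boolP (w \in _)) => [/set_mem [_ h]|_];
    last by rewrite mul0e; exact: measure_ge0.
  rewrite mul1e /= (hiii 0 d d0).1 /linterp !subr0 add0r mul1r.
  set y := X 0 d b w.
  rewrite setI1; apply: le_measure; rewrite ?inE //.
    apply: mset_lt; apply: measurable_realfun.measurable_funD => //; exact: measurable_cst.
  move=> w0 /= hlt; rewrite /G /=.
  move: h; rewrite /= in_itv /= -ltr_norml => hy.
  have hyb : `|y / b| < t.
    by rewrite normrM normfV (gtr0_norm b0) ltr_pdivrMr // mulrC.
  have := ler_normD (y / b) (X 0 b 1 w0); lra.
rewrite integral_cst // [X in (_ * X)%E](_ : _ = 1%E) ?mule1 //; exact: probability_setT.
Qed.

Lemma scale (X : R -> R -> R -> T -> R) (n : nat) (s : R) : cond_v P X ->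
  P [set w | (Num.sqrt (2^+n) * s <= `|X 0 (2^+n.+1) (2^+n) w|)%R] =
  P [set w | (s <= `|X 0 2 1 w|)%R].
Proof.
move=> [_ hv].
set l := (2:R)^+n.
have l0 : 0 < l by rewrite /l exprn_gt0.
have sq0 : 0 < Num.sqrt l by rewrite sqrtr_gt0.
have := hv 0 2 l (ler0n _ 2) l0 1 (fun _ => 1) (fun _ => [set z | s <= `|z|]).
move=> /(_ (fun _ => ltac:(by rewrite ler01 ler1n))).
move=> /(_ (fun _ => @mset_le _ R id _ (@measurable_id _ _ setT))).
rewrite /fdd_event !setI1 mulr0 mulr1 -exprSr -/l => Heq.
have -> : [set w | (Num.sqrt l * s <= `|X 0 (2^+n.+1) l w|)%R] =
  [set w | (s <= `|(Num.sqrt l)^-1 * X 0 (2^+n.+1) l w|)%R].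
  apply/seteqP; split => w /=;
  by rewrite normrM normfV (gtr0_norm sq0) (mulrC _^-1) ler_pdivlMr // (mulrC s).
exact Heq.
Qed.

Lemma logp_ge0 (y : R) : 0 <= logp y.
Proof.
rewrite /logp; case: ifPn => // /negbTE; rewrite leNgt => /negbFE h.
by apply: ltW; exact: ln_gt0.
Qed.

Lemma logp_ge_ln (y : R) : ln y <= logp y.
Proof.
rewrite /logp; case: ifPn => // h; exact: ln_le0.
Qed.

Lemma count_le (r y : R) : 1 < r -> forall N : nat,
  \sum_(j < N) (((r ^+ j <= y)%R)%:R : R) <= N%:R /\
  \sum_(j < N) (((r ^+ j <= y)%R)%:R : R) <= 1 + logp y / ln r.
Proof.
move=> r1; have lr : 0 < ln r by exact: ln_gt0.
have r0 : 0 < r by exact: lt_trans ltr01 r1.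
have q0 : 0 <= logp y / ln r by apply: divr_ge0 => //; [exact: logp_ge0 | exact: ltW].
elim=> [|N [IH1 IH2]]; first by rewrite big_ord0; split => //; lra.
rewrite big_ord_recr /=.
case: (boolP (r ^+ N <= y)) => h /=.
  have rN0 : 0 < r ^+ N by exact: exprn_gt0.
  have y0 : 0 < y by exact: lt_le_trans rN0 h.
  have : ln (r ^+ N) <= ln y by rewrite ler_ln // posrE.
  rewrite lnXn // => hN.
  have hN' : N%:R <= logp y / ln r.
    rewrite ler_pdivlMr // mulrC mulr_natr; exact: le_trans hN (logp_ge_ln y).
  rewrite -[N.+1]addn1 natrD; split; lra.
rewrite -[N.+1]addn1 natrD; split; lra.
Qed.

Lemma Pfin (A : set T) : measurable A -> P A \is a fin_num.
Proof.
move=> mA; rewrite ge0_fin_numE ?measure_ge0 //.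
exact: le_lt_trans (probability_le1 P mA) (ltry _).
Qed.

Lemma in_setb (f : T -> bool) w : (w \in [set w | f w]) = f w.
Proof. by apply/idP/idP => [/set_mem|h] //; apply/mem_set. Qed.

Lemma layer (Y : T -> R) (r : R) : 1 < r -> measurable_fun setT Y ->
  (\int[P]_w (logp `|Y w|)%:E < +oo)%E ->
  exists B : R, forall N, \sum_(j < N) fine (P [set w | (r^+j <= `|Y w|)%R]) <= B.
Proof.
move=> r1 mY hint.
set k := (ln r)^-1.
have k0 : 0 <= k by rewrite /k invr_ge0; apply: ltW; exact: ln_gt0.
set L := (\int[P]_w (logp `|Y w|)%:E)%E in hint *.
have L0 : (0 <= L)%E by apply: integral_ge0 => w _; rewrite lee_fin logp_ge0.
have Lfin : L \is a fin_num by rewrite ge0_fin_numE.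
have mlogR : measurable_fun setT (fun w => logp `|Y w|).
  have -> : (fun w => logp `|Y w|) = (@ln R) \o ((fun w => `|Y w|) \max cst 1).
    apply/funext => w /=; rewrite /logp; case: ifPn => h.
      by rewrite max_r // ln1.
    by rewrite max_l // ltW // ltNge.
  apply: measurableT_comp; first exact: measurable_realfun.measurable_ln.
  apply: measurable_realfun.measurable_maxr; last exact: measurable_cst.
  exact: measurableT_comp (@measurable_realfun.normr_measurable R setT) mY.
have mlog : measurable_fun setT (fun w => (logp `|Y w|)%:E).
  exact: measurableT_comp (@measurable_realfun.EFin_measurable R setT) mlogR.
exists (1 + k * fine L) => N.
set A := fun j : nat => [set w | (r^+j <= `|Y w|)%R].
have mA j : measurable (A j) by exact: mset_le.
rewrite -lee_fin -sumEFin.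
have -> : (\sum_(j < N) (fine (P (A j)))%:E = \sum_(j < N) \int[P]_w (\1_(A j) w)%:E)%E.
  by apply: eq_bigr => j _; rewrite fineK ?Pfin // integral_indic // setIT.
rewrite -ge0_integral_sum //; first last.
- move=> j; apply: measurableT_comp (@measurable_realfun.EFin_measurable R setT) _.
  exact: measurable_realfun.measurable_indic.
apply: (le_trans (@ge0_le_integral_nm _ (fun w => (1 + k * logp `|Y w|)%:E) _ _)).
- by move=> w; apply: sume_ge0 => j _; rewrite lee_fin indicE ler0n.
- move=> w; rewrite sumEFin lee_fin.
  have := (count_le r (`|Y w|) r1 N).2; rewrite (mulrC _ k).
  apply: le_trans; apply: ler_sum => j _.
  by rewrite indicE /A in_setb.
under eq_integral do rewrite EFinD EFinM.
rewrite ge0_integralD //; first last.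
- exact: measurable_funeM.
- by move=> w _; rewrite -EFinM lee_fin mulr_ge0 // logp_ge0.
rewrite ge0_integralZl_EFin //; first last.
- by move=> w _; rewrite lee_fin logp_ge0.
rewrite -/L integral_cst //= [X in (_ * X)%E](_ : _ = 1%E); last exact: probability_setT.
by rewrite mule1 -(fineK Lfin) -EFinM -EFinD fineK.
Qed.

Lemma sum_shift (s : nat -> R) K n :
  \sum_(j < K + n) s j = \sum_(j < K) s j + \sum_(j < n) s (K + j)%N.
Proof.
elim: n => [|n IH]; first by rewrite addn0 big_ord0 addr0.
by rewrite addnS !big_ord_recr /= IH addrA.
Qed.

Lemma tail (s : nat -> R) (B eps : R) : (forall N, \sum_(j < N) s j <= B) ->
  0 < eps -> exists K, forall n, \sum_(j < n) s (K + j)%N <= eps.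
Proof.
move=> hB e0.
set E := [set x | exists N, x = \sum_(j < N) s j].
have hs : has_sup E.
  split; first by exists 0, 0%N; rewrite big_ord0.
  by exists B => _ [N ->]; exact: hB.
have [_ [K ->] hK] := sup_adherent e0 hs.
exists K => n.
have := sup_upper_bound hs (ex_intro _ (K + n)%N erefl).
rewrite sum_shift; lra.
Qed.

Lemma mset_ge (f : T -> R) (a : R) : measurable_fun setT f ->
  measurable [set w | a <= f w].
Proof.
move=> mf.
have := mf measurableT `[a, +oo[%classic (measurable_itv _).
rewrite setTI; congr (measurable _); apply/seteqP; split => w /=;
  by rewrite in_itv /= andbT.
Qed.

Lemma sqrt2X (k : nat) : Num.sqrt ((2:R)^+k) <= (3/2)^+k.
Proof.
have h32 : (0:R) <= 3/2 by lra.
apply: (le_trans (_ : _ <= Num.sqrt (((3/2)^+k)^+2))).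
  rewrite ler_sqrt; last exact: exprn_ge0 (exprn_ge0 _ h32).
  rewrite exprAC; apply: lerXn2r; rewrite ?nnegrE ?expr2; lra.
by rewrite sqrtr_sqr ger0_norm // exprn_ge0.
Qed.

Lemma tbound (c : R) k : 0 <= c ->
  c * (11/10)^+k * Num.sqrt (2^+k) / 2^+k <= c * (33/40)^+k.
Proof.
move=> c0.
rewrite (_ : (33/40 : R)^+k = (11/10)^+k * (3/2)^+k / 2^+k); last first.
  by rewrite -exprMn -expr_div_n; congr (_ ^+ _); lra.
rewrite -!mulrA; apply: ler_wpM2l => //.
apply: ler_wpM2l; first by apply: exprn_ge0; lra.
apply: ler_wpM2r; first by rewrite invr_ge0 exprn_ge0.
exact: sqrt2X.
Qed.

Lemma geo (q : R) n : 0 <= q -> q < 1 -> \sum_(k < n) q^+k <= (1 - q)^-1.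
Proof.
move=> q0 q1.
have E : (\sum_(k < n) q^+k) * (1 - q) = 1 - q^+n.
  elim: n => [|n IH]; first by rewrite big_ord0 expr0 mul0r subrr.
  by rewrite big_ord_recr /= mulrDl IH exprS; ring.
rewrite -div1r ler_pdivlMr; last lra.
by rewrite E; have := exprn_ge0 n q0; lra.
Qed.

End Aux.

Theorem lemma5p1 (dT : measure_display) (T : measurableType dT) (R : realType)
  (P : probability T R) (X : R -> R -> R -> T -> R) :
  meas_family X -> cond_i P X -> cond_ii P X -> cond_iii X -> cond_iv P X ->
  cond_v P X ->
  forall eps : R, 0 < eps -> exists2 M : R, 0 < M &
    forall n : nat, (P [set w | (M <= X 0 (2 ^+ n) 1 w)%R] <= eps%:E)%E.
Proof.
move=> hm hi hii hiii hiv hv eps e0.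
set r : R := 11/10.
have r1 : 1 < r by rewrite /r; lra.
set Y := X 0 2 1.
have h02 : (0:R) <= 2 by lra.
have h012 : (0:R) <= (1:R) <= (2:R) by rewrite ler01 /=; lra.
have mY : measurable_fun setT Y := hm 0 2 1 h02 h012.
have [B hB] := @layer _ _ _ P Y r r1 mY (hi 0 2 1 h02 h012).
set s := fun j : nat => fine (P [set w | (r^+j <= `|Y w|)%R]).
have [K hK] := @tail R s B eps hB e0.
set c := r^+K.
have c0 : 0 < c by rewrite /c exprn_gt0 // (lt_trans ltr01 r1).
set t := fun k : nat => c * r^+k * Num.sqrt (2^+k) / 2^+k.
set Mn := fun n : nat => \sum_(k < n) t k.
have main : forall n, (P [set w | (Mn n < `|X 0 (2^+n) 1 w|)%R] <=
                       (\sum_(k < n) s (K + k)%N)%:E)%E.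
  elim=> [|n IH].
    rewrite /Mn big_ord0 expr0 (_ : [set w | _] = set0) ?measure0 //.
    - by rewrite big_ord0.
    apply/seteqP; split => w //=.
    by rewrite (hiii 0 1 ler01).2 normr0 ltxx.
  rewrite /Mn big_ord_recr /= -/(Mn n).
  apply: le_trans (@step _ _ _ P X n (Mn n) (t n) hm hiii hiv) _.
  rewrite big_ord_recr /= EFinD; apply: leeD => //.
  have -> : 2^+n * t n = Num.sqrt (2^+n) * (c * r^+n).
    rewrite /t; field; exact: expf_neq0.
  rewrite (@scale _ _ _ P X n) //.
  rewrite /s /c -exprD fineK //; apply: Pfin; exact: mset_le.
exists (6 * c + 1); first lra.
move=> n.
have hMn : Mn n <= 6 * c.
  apply: (le_trans (_ : _ <= \sum_(k < n) c * (33/40)^+k)).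
    by apply: ler_sum => k _; apply: tbound; exact: ltW.
  rewrite -mulr_sumr mulrC ler_wpM2r //; first exact: ltW.
  apply: le_trans (@geo R (33/40) n _ _) _; try lra.
  rewrite -div1r ler_pdivrMr; lra.
have mX : measurable_fun setT (X 0 (2^+n) 1).
  apply: hm; first exact: exprn_ge0.
  by rewrite ler01 /= exprn_ege1 // ler1n.
apply: (le_trans (le_measure _ _ _ (_ : _ `<=` [set w | (Mn n < `|X 0 (2^+n) 1 w|)%R]))).
- by rewrite inE; exact: mset_ge.
- by rewrite inE; exact: mset_lt.
- by move=> w /= h; have := ler_norm (X 0 (2^+n) 1 w); lra.
apply: le_trans (main n) _; rewrite lee_fin; exact: hK.
Qed.
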